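(* Let $\overrightarrow{W}$ be a Morse sequence on a simplicial complex $K$, with reference map $\curlywedge$ and coreference map $\curlyvee$. (1) If $z,z'\in Z_p(K)$ satisfy $\curlywedge(z)=\curlywedge(z')$ and $z,z'\subseteq W^+_p$, then $z=z'$. (2) If $z,z'\in Z^p(K)$ satisfy $\curlyvee(z)=\curlyvee(z')$ and $z,z'\subseteq K\setminus W^-_p$, then $z=z'$.
   Context: A simplicial complex $K$ is a finite collection of non-empty finite sets closed under taking non-empty subsets; $\dim\sigma=|\sigma|-1$, $K^{(p)}$ the set of $p$-simplices. A pair $(\sigma,\tau)$ with $\sigma\subsetneq\tau$ is a free pair for $K$ if $\tau$ is the only simplex other than $\sigma$ containing $\sigma$; $K$ is then an elementary expansion of $K\setminus\{\sigma,\tau\}$. If $\nu$ is a facet (maximal simplex) of $K$, $K$ is an elementary filling of $K\setminus\{\nu\}$. A Morse sequence on $K$ is a sequence $\langle\emptyset=K_0,\dots,K_k=K\rangle$ with each $K_i$ an elementary expansion or filling of $K_{i-1}$; simplices added by fillings are critical; for an expansion $K_i=K_{i-1}\cup\{\sigma,\tau\}$, $\sigma\subset\tau$, $(\sigma,\tau)$ is a regular pair, $\sigma$ lower regular, $\tau$ upper regular; $\widehat W,\underline W,\overline W$ denote the sets of critical, lower regular and upper regular simplices. $K[p]$ is the $\mathbb{Z}_2$-vector space of subsets of $K^{(p)}$ (sum = symmetric difference, $0=\emptyset$). For $\sigma\in K^{(p)}$, $\partial(\sigma)=\{\tau\in K^{(p-1)}:\tau\subset\sigma\}$, $\delta(\sigma)=\{\tau\in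 K^{(p+1)}:\sigma\subset\tau\}$, extended linearly; $Z_p(K)=\ker(\partial:K[p]\to K[p-1])$ (cycles) and $Z^p(K)=\ker(\delta:K[p]\to K[p+1])$ (cocycles). The reference map $\curlywedge$ is the unique map assigning to each $p$-simplex a set of critical $p$-simplices, extended linearly (mod 2), with $\curlywedge(\nu)=\{\nu\}$ for critical $\nu$ and $\curlywedge(\tau)=0=\curlywedge(\partial(\tau))$ for upper regular $\tau$; the coreference map $\curlyvee$ is the unique such map with $\curlyvee(\nu)=\{\nu\}$ for critical $\nu$ and $\curlyvee(\sigma)=0=\curlyvee(\delta(\sigma))$ for lower regular $\sigma$. Skeletons: $W^-_p=\{\nu\in\overline W:\dim\nu\le p\}\cup\{\nu\in\widehat W\cup\underline W:\dim\nu\le p-1\}$, $W^+_p=\{\nu\in\widehat W\cup\overline W:\dim\nu\le p\}\cup\{\nu\in\underline W:\dim\nu\le p-1\}$. *)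

(* Defs.v *)
(* Simplices are finite sets of vertices of a finite type V;
   a complex is a {set {set V}}; Z_2-chains are sets of simplices. *)
From mathcomp Require Import all_boot.
Set Implicit Arguments. Unset Strict Implicit. Unset Printing Implicit Defensive.

Section Morse.
Variable V : finType.
Notation simplex := {set V}.
Notation cplx := {set {set V}}.

Definition is_complex (K : cplx) : Prop :=
  set0 \notin K /\
  forall s t : simplex, s \in K -> t != set0 -> t \subset s -> t \in K.

(* dim s = #|s| - 1, so s is a p-simplex iff #|s| = p.+1 *)
Definition pskel (K : cplx) (p : nat) : cplx := [set s in K | #|s| == p.+1].

Definition free_pair (K : cplx) (s t : simplex) : Prop :=
  s \proper t /\ s \in K /\ t \in K /\
  forall x, x \in K -> s \subset x -> x = s \/ x = t.

Definition is_facet (K : cplx) (nu : simplex) : Prop :=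
  nu \in K /\ forall x, x \in K -> nu \subset x -> x = nu.

Inductive step := Fill of simplex | Expand of simplex & simplex.

Definition added (st : step) : cplx :=
  match st with Fill n => [set n] | Expand s t => [set s; t] end.

Definition prefix (W : seq step) (i : nat) : cplx :=
  \bigcup_(st <- take i W) added st.

Definition step_ok (Kprev Knext : cplx) (st : step) : Prop :=
  is_complex Knext /\
  match st with
  | Fill nu => is_facet Knext nu /\ Kprev = Knext :\ nu
  | Expand s t => free_pair Knext s t /\ Kprev = Knext :\: [set s; t]
  end.

Definition is_morse_seq (K : cplx) (W : seq step) : Prop :=
  prefix W (size W) = K /\
  forall i, i < size W -> step_ok (prefix W i) (prefix W i.+1) (nth (Fill set0) W i).

Definition critical (W : seq step) : cplx :=
  [set nu | has (fun st => if st is Fill n then n == nu else false) W].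
Definition lower_reg (W : seq step) : cplx :=
  [set nu | has (fun st => if st is Expand s _ then s == nu else false) W].
Definition upper_reg (W : seq step) : cplx :=
  [set nu | has (fun st => if st is Expand _ t then t == nu else false) W].

Definition bd (K : cplx) (p : nat) (c : cplx) : cplx :=
  [set tau in pskel K p.-1 | (0 < p) && odd #|[set s in c | tau \subset s]|].
Definition cobd (K : cplx) (p : nat) (c : cplx) : cplx :=
  [set tau in pskel K p.+1 | odd #|[set s in c | s \subset tau]|].

Definition chain (K : cplx) (p : nat) (c : cplx) : Prop := c \subset pskel K p.
Definition is_cycle (K : cplx) (p : nat) (z : cplx) : Prop :=
  chain K p z /\ bd K p z = set0.
Definition is_cocycle (K : cplx) (p : nat) (z : cplx) : Prop :=
  chain K p z /\ cobd K p z = set0.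

Definition linext (f : simplex -> cplx) (c : cplx) : cplx :=
  [set nu | odd #|[set s in c | nu \in f s]|].

Definition is_reference_map (K : cplx) (W : seq step) (f : simplex -> cplx) : Prop :=
  (forall p s, s \in pskel K p -> f s \subset critical W :&: pskel K p) /\
  (forall nu, nu \in K -> nu \in critical W -> f nu = [set nu]) /\
  (forall p tau, tau \in pskel K p -> tau \in upper_reg W ->
      f tau = set0 /\ linext f (bd K p [set tau]) = set0).

Definition is_coreference_map (K : cplx) (W : seq step) (f : simplex -> cplx) : Prop :=
  (forall p s, s \in pskel K p -> f s \subset critical W :&: pskel K p) /\
  (forall nu, nu \in K -> nu \in critical W -> f nu = [set nu]) /\
  (forall p sg, sg \in pskel K p -> sg \in lower_reg W ->
      f sg = set0 /\ linext f (cobd K p [set sg]) = set0).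

(* skeletons W^+_p and W^-_p (dim nu <= p  iff  #|nu| <= p+1) *)
Definition Wplus (W : seq step) (p : nat) : cplx :=
  [set nu | ((nu \in critical W) || (nu \in upper_reg W)) && (#|nu| <= p.+1)]
  :|: [set nu | (nu \in lower_reg W) && (#|nu| <= p)].
Definition Wminus (W : seq step) (p : nat) : cplx :=
  [set nu | (nu \in upper_reg W) && (#|nu| <= p.+1)]
  :|: [set nu | ((nu \in critical W) || (nu \in lower_reg W)) && (#|nu| <= p)].

End Morse.

(* Main.v *)
Require Import Defs.
From mathcomp Require Import all_boot zify.
Require Import Defs.
Set Implicit Arguments. Unset Strict Implicit. Unset Printing Implicit Defensive.

Section Pf.
Variable V : finType.
Implicit Types (K c z A B : {set {set V}}) (W : seq (step V)) (s t x : {set V}).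

Definition sd A B := (A :\: B) :|: (B :\: A).

Lemma odd_sd A B : odd #|sd A B| = odd #|A| (+) odd #|B|.
Proof.
rewrite /sd cardsU.
have -> : (A :\: B) :&: (B :\: A) = set0.
  by apply/setP => x; rewrite !inE; case: (x \in A); case: (x \in B).
rewrite cards0 subn0 -(cardsID B A) -(cardsID A B) setIC !oddD.
by case: (odd _); case: (odd _); case: (odd _).
Qed.

Lemma filter_sd (P : pred {set V}) A B :
  [set s in sd A B | P s] = sd [set s in A | P s] [set s in B | P s].
Proof.
by apply/setP => x; rewrite !inE; case: (x \in A); case: (x \in B); case: (P x).
Qed.

Lemma sd_eq0 A B : sd A B = set0 -> A = B.
Proof.
move/setP => H; apply/setP => x; move: (H x); rewrite !inE.
by case: (x \in A); case: (x \in B).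
Qed.

Lemma sd_in A B x : x \in sd A B -> (x \in A) || (x \in B).
Proof. by rewrite !inE; case: (x \in A); case: (x \in B). Qed.

Lemma in_bigcup_seq (l : seq (step V)) x :
  (x \in \bigcup_(st <- l) added st) = has (fun st => x \in added st) l.
Proof.
elim: l => [|a l IH]; first by rewrite big_nil in_set0.
by rewrite big_cons in_setU IH.
Qed.

Lemma in_prefix W i x : x \in prefix W i ->
  exists j, [/\ j < i, j < size W & x \in added (nth (Fill set0) W j)].
Proof.
rewrite /prefix in_bigcup_seq => /(has_nthP (Fill set0)) [j].
rewrite size_take => Hj; rewrite nth_take; last by case: (ltnP i (size W)) Hj => H Hj; lia.
move=> Hx; exists j; split => //; case: (ltnP i (size W)) Hj => H Hj; lia.
Qed.

Lemma prefix_in W i j x : j < i -> j < size W ->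
  x \in added (nth (Fill set0) W j) -> x \in prefix W i.
Proof.
move=> ji js Hx; rewrite /prefix in_bigcup_seq; apply/(has_nthP (Fill set0)).
exists j; first by rewrite size_take; case: (ltnP i (size W)) => H; lia.
by rewrite nth_take.
Qed.

Lemma codim L s t : is_complex L -> free_pair L s t -> #|t| = #|s|.+1.
Proof.
move=> [_ Hcl] [Hst [Hs [Ht Hfr]]].
have [Hsub [v vt vs]] := properP Hst.
have sub : v |: s \subset t.
  by apply/subsetP => y; rewrite !inE => /orP [/eqP -> //|]; exact/subsetP.
have ne : v |: s != set0 by apply/set0Pn; exists v; rewrite !inE eqxx.
have [E|E] := Hfr _ (Hcl _ _ Ht ne sub) (subsetUr _ _).
  by move: vs; rewrite -E !inE eqxx.
by rewrite -E cardsU1 vs.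
Qed.

Definition fu W t := find (fun st => if st is Expand _ t' then t' == t else false) W.
Definition fl W s := find (fun st => if st is Expand s' _ then s' == s else false) W.

Lemma fu_spec W t : t \in upper_reg W ->
  fu W t < size W /\ exists s, nth (Fill set0) W (fu W t) = Expand s t.
Proof.
rewrite inE => H; split; first by rewrite /fu -has_find.
have := nth_find (Fill set0) H; rewrite -/(fu W t).
by case: (nth _ _ _) => // a b /eqP ->; exists a.
Qed.

Lemma fl_spec W s : s \in lower_reg W ->
  fl W s < size W /\ exists t, nth (Fill set0) W (fl W s) = Expand s t.
Proof.
rewrite inE => H; split; first by rewrite /fl -has_find.
have := nth_find (Fill set0) H; rewrite -/(fl W s).
by case: (nth _ _ _) => // a b /eqP ->; exists b.
Qed.

Lemma fresh K W j x : is_morse_seq K W -> j < size W ->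
  x \in added (nth (Fill set0) W j) -> x \notin prefix W j.
Proof.
move=> [_ HM] js; have := HM j js.
case: (nth _ _ _) => [n|a b] [_ [_ ->]] /=; rewrite !inE.
  by move=> ->; rewrite ?andbF ?andFb.
by move=> ->.
Qed.

Lemma prefix_K K W i x : is_morse_seq K W -> x \in prefix W i -> x \in K.
Proof.
move=> [HK _] /in_prefix [j [_ js Hx]]; rewrite -HK; exact: (prefix_in (i:=size W) js js Hx).
Qed.

Lemma cover K W x : is_morse_seq K W -> x \in K ->
  [|| x \in critical W, x \in lower_reg W | x \in upper_reg W].
Proof.
move=> [HK _]; rewrite -HK => /in_prefix [j [_ js Hx]].
have hj : forall a : pred (step V), a (nth (Fill set0) W j) -> has a W.
  by move=> a ha; apply/(has_nthP (Fill set0)); exists j.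
move: Hx (hj (fun st => if st is Fill n then n == x else false))
  (hj (fun st => if st is Expand s _ then s == x else false))
  (hj (fun st => if st is Expand _ t then t == x else false)).
case: (nth _ _ _) => [n|a b] /=; rewrite !inE.
  by move/eqP => -> /(_ (eqxx _)) ->.
by case/orP => /eqP -> _ H1 H2; [rewrite H1 ?orbT | rewrite H2 ?orbT].
Qed.


Lemma upper_nil K W p c : is_morse_seq K W -> c \subset pskel K p ->
  (forall s, s \in c -> s \in upper_reg W) -> bd K p c = set0 -> c = set0.
Proof.
move=> HM Hc Hu Hbd; case: (set_0Vmem c) => [//|[t0 t0c]].
case: (@arg_maxnP _ t0 [pred x | x \in c] (fu W) t0c) => t tc tmax.
have [ltsz [s Hnth]] := fu_spec (Hu _ tc).
have := HM.2 _ ltsz; rewrite Hnth => -[Hcx [Hfree _]].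
have Hcard := codim Hcx Hfree.
have tK : #|t| = p.+1 by move: (subsetP Hc _ tc); rewrite inE => /andP[_ /eqP].
have sne : s != set0.
  by apply/negP => /eqP E; case: Hcx => H _; case: Hfree => _ [Hs _]; move: H; rewrite -E Hs.
have sK : s \in K.
  case: Hfree => _ [Hs _]; exact: prefix_K HM Hs.
have p0 : 0 < p.
  move: sne; rewrite -cards_eq0; lia.
have Eset : [set x in c | s \subset x] = [set t].
  apply/setP => x; rewrite !inE; apply/andP/eqP => [[xc sx]|->].
    have [xlt [s' Hx']] := fu_spec (Hu _ xc).
    have xin : x \in prefix W (fu W t).+1.
      apply: (prefix_in (j := fu W x)) => //; first by have := tmax _ xc; lia.
      by rewrite Hx' !inE eqxx orbT.
    case: Hfree => _ [_ [_ Hfr]]; case: (Hfr _ xin sx) => // E.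
    have : #|x| = p.+1 by move: (subsetP Hc _ xc); rewrite inE => /andP[_ /eqP].
    by rewrite E; lia.
  by split => //; case: Hfree => /properP [] .
have : s \in bd K p c.
  rewrite inE Eset cards1 p0 /= andbT inE sK /=; apply/eqP; lia.
by rewrite Hbd inE.
Qed.

Lemma lower_nil K W p c : is_morse_seq K W -> c \subset pskel K p ->
  (forall s, s \in c -> s \in lower_reg W) -> cobd K p c = set0 -> c = set0.
Proof.
move=> HM Hc Hl Hbd; case: (set_0Vmem c) => [//|[s0 s0c]].
case: (@arg_minnP _ s0 [pred x | x \in c] (fl W) s0c) => s sc smin.
have [ltsz [t Hnth]] := fl_spec (Hl _ sc).
have := HM.2 _ ltsz; rewrite Hnth => -[Hcx [Hfree _]].
have Hcard := codim Hcx Hfree.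
have sK : #|s| = p.+1 by move: (subsetP Hc _ sc); rewrite inE => /andP[_ /eqP].
have tK : t \in K.
  case: Hfree => _ [_ [Ht _]]; exact: prefix_K HM Ht.
have tP : t \in prefix W (fl W s).+1 by case: Hfree => _ [_ [Ht _]].
have Eset : [set x in c | x \subset t] = [set s].
  apply/setP => x; rewrite !inE; apply/andP/eqP => [[xc xt]|->].
    apply/eqP/negPn/negP => xs.
    have [xlt [t' Hx']] := fl_spec (Hl _ xc).
    have le := smin _ xc.
    have ne : fl W s != fl W x.
      by apply/eqP => E; move: Hnth; rewrite E Hx' => -[E1 _]; rewrite E1 eqxx in xs.
    have lt : fl W s < fl W x by rewrite ltn_neqAle ne le.
    have tj : t \in prefix W (fl W x).
      apply: (prefix_in (j := fl W s)) => //; by rewrite Hnth !inE eqxx orbT.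
    have Hcj : is_complex (prefix W (fl W x)).
      have := HM.2 (fl W x).-1 ltac:(lia); rewrite prednK; last lia.
      by case.
    have xne : x != set0.
      apply/negP => /eqP E; have : #|x| = p.+1 by move: (subsetP Hc _ xc); rewrite inE => /andP[_ /eqP].
      by rewrite E cards0.
    have xin := Hcj.2 _ _ tj xne xt.
    have := fresh HM xlt; rewrite Hx' => /(_ x); rewrite !inE eqxx /= => /(_ isT).
    by rewrite xin.
  by split => //; case: Hfree => /properP [].
have : t \in cobd K p c.
  rewrite inE Eset cards1 /= andbT inE tK /=; apply/eqP; lia.
by rewrite Hbd inE.
Qed.

End Pf.

Theorem theorem7 (V : finType) (K : {set {set V}}) (W : seq (step V))
    (ref coref : {set V} -> {set {set V}}) :
  is_complex K -> is_morse_seq K W ->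
  is_reference_map K W ref -> is_coreference_map K W coref ->
  (forall (p : nat) (z z' : {set {set V}}),
      is_cycle K p z -> is_cycle K p z' ->
      linext ref z = linext ref z' ->
      z \subset Wplus W p -> z' \subset Wplus W p -> z = z') /\
  (forall (p : nat) (z z' : {set {set V}}),
      is_cocycle K p z -> is_cocycle K p z' ->
      linext coref z = linext coref z' ->
      z \subset K :\: Wminus W p -> z' \subset K :\: Wminus W p -> z = z').
Proof.
move=> HK HM Href Hcoref; split.
- move=> p z z' [zc zb] [z'c z'b] Hl zW z'W.
  apply: sd_eq0.
  have cP : forall x, x \in sd z z' -> x \in pskel K p /\ x \in Wplus W p.
    move=> x /sd_in /orP [] xi; split.
    + exact: (subsetP zc).
    + exact: (subsetP zW).
    + exact: (subsetP z'c).
    + exact: (subsetP z'W).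
  have cw : forall x, x \in pskel K p -> x \in Wplus W p ->
      (x \in critical W) || (x \in upper_reg W).
    move=> x; rewrite [x \in pskel _ _]inE => /andP[_ /eqP xs].
    rewrite !inE xs => /orP [/andP[h _] // | /andP[_]]; by rewrite ltnn.
  apply: (upper_nil (p := p) HM).
  + by apply/subsetP => x /cP [h _].
  + move=> x xc; have [xp xw] := cP _ xc.
    case/orP: (cw _ xp xw) => // xcr; exfalso.
    have E : [set s in sd z z' | x \in ref s] = [set x].
      apply/setP => s; rewrite [in LHS]inE [in RHS]inE; apply/andP/eqP => [[sc xs]|->].
        have [sp sw] := cP _ sc.
        case/orP: (cw _ sp sw) => scr.
          move: xs; rewrite (Href.2.1 s _ scr) ?inE //; first by move/eqP.
          by case/setIdP: sp.
        by move: xs; rewrite (Href.2.2 p s sp scr).1 inE.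
      split => //; rewrite (Href.2.1 x _ xcr) ?inE //.
      by case/setIdP: xp.
    move/setP: Hl => /(_ x); rewrite /linext !inE.
    have := odd_sd [set s in z | x \in ref s] [set s in z' | x \in ref s].
    rewrite -filter_sd E cards1 /=.
    by case: (odd _); case: (odd _).
  + apply/setP => x; move/setP: zb => /(_ x); move/setP: z'b => /(_ x).
    rewrite /bd !inE filter_sd odd_sd.
    case: (x \in K) => //=; case: (_ == _) => //=; case: (0 < p) => //=.
    by case: (odd _); case: (odd _).
- move=> p z z' [zc zb] [z'c z'b] Hl zW z'W.
  apply: sd_eq0.
  have cP : forall x, x \in sd z z' -> x \in pskel K p /\ x \in K :\: Wminus W p.
    move=> x /sd_in /orP [] xi; split.
    + exact: (subsetP zc).
    + exact: (subsetP zW).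
    + exact: (subsetP z'c).
    + exact: (subsetP z'W).
  have cw : forall x, x \in pskel K p -> x \in K :\: Wminus W p ->
      (x \in critical W) || (x \in lower_reg W).
    move=> x; rewrite [x \in pskel _ _]inE => /andP[xK /eqP xs] xw.
    case/or3P: (cover HM xK) => [->|->|xu]; rewrite ?orbT //.
    move: xw; rewrite inE => /andP [H _]; case/negP: H.
    apply/setUP; left; rewrite inE xu xs leqnn.
    done.
  apply: (lower_nil (p := p) HM).
  + by apply/subsetP => x /cP [h _].
  + move=> x xc; have [xp xw] := cP _ xc.
    case/orP: (cw _ xp xw) => // xcr; exfalso.
    have E : [set s in sd z z' | x \in coref s] = [set x].
      apply/setP => s; rewrite [in LHS]inE [in RHS]inE; apply/andP/eqP => [[sc xs]|->].
        have [sp sw] := cP _ sc.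
        case/orP: (cw _ sp sw) => scr.
          move: xs; rewrite (Hcoref.2.1 s _ scr) ?inE //; first by move/eqP.
          by case/setIdP: sp.
        by move: xs; rewrite (Hcoref.2.2 p s sp scr).1 inE.
      split => //; rewrite (Hcoref.2.1 x _ xcr) ?inE //.
      by case/setIdP: xp.
    move/setP: Hl => /(_ x); rewrite /linext !inE.
    have := odd_sd [set s in z | x \in coref s] [set s in z' | x \in coref s].
    rewrite -filter_sd E cards1 /=.
    by case: (odd _); case: (odd _).
  + apply/setP => x; move/setP: zb => /(_ x); move/setP: z'b => /(_ x).
    rewrite /cobd !inE filter_sd odd_sd.
    case: (x \in K) => //=; case: (_ == _) => //=.
    by case: (odd _); case: (odd _).
Qed.
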